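(* Let $M\subseteq\mathbb{N}$ and let $L$ be the class of all partial functions from $\mathbb{N}^k$ to $\mathbb{N}$ (all arities $k\ge1$) whose graphs are enumeration reducible to $M$. Assume $L$ satisfies: (1) $L$ contains all partial recursive functions and is closed under substitution, primitive recursion and the $\mu$-operator; (2) for every unary function $f\in L$ there exist a set $R\subseteq\mathbb{N}$ and unary functions $\alpha,\omega\in L$ whose domains contain $R$, such that the indicator function of $R$ belongs to $L$, and for all $x,y$, $f(x)$ is defined and equals $y$ iff there is $m\in R$ with $\alpha(m)=x$ and $\omega(m)=y$; (3) there exists a binary function $F\in L$ such that for every unary $f\in L$ there is $n$ with $F(n,\cdot)=f$. Then there exists a set $S\subseteq\mathbb{N}$ such that $M$ is enumeration equivalent to $S\oplus\overline{S}$, i.e., $M$ is enumeration reducible to $S\oplus\overline S$ and $S\oplus\overline S$ is enumeration reducible to $M$.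
   Context: Fix a standard recursive bijective encoding of tuples of natural numbers by natural numbers. The graph of a partial function $g:\mathbb{N}^k\to\mathbb{N}$ is the set of codes of tuples $(x_1,\dots,x_k,y)$ with $g(x_1,\dots,x_k)=y$. For $X,Y\subseteq\mathbb{N}$, $X$ is enumeration reducible to $Y$ if there is a recursively enumerable set $W$ of pairs $(x,u)$ such that $x\in X$ iff there is $u$ with $(x,u)\in W$ and $D_u\subseteq Y$, where $D_u$ is the finite set with canonical index $u$. $\overline S=\mathbb{N}\setminus S$, and $A\oplus B=\{2n\mid n\in A\}\cup\{2n+1\mid n\in B\}$. *)

(* Defs.v *)
From mathcomp Require Import all_boot.

Set Implicit Arguments.
Unset Strict Implicit.
Unset Printing Implicit Defensive.

Definition cpair (x y : nat) : nat := ((x + y) * (x + y).+1) %/ 2 + y.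

(* Code of a nonempty tuple (x_1, ..., x_n): iterated Cantor pairing,
   code [x] = x and code (x :: xs) = cpair x (code xs).  For each fixed
   length n >= 1 this is a recursive bijection nat^n -> nat. *)
Fixpoint tcode (s : seq nat) : nat :=
  match s with
  | [::] => 0
  | [:: x] => x
  | x :: xs => cpair x (tcode xs)
  end.

(* Canonical finite sets: D_u = { i | the i-th binary digit of u is 1 }. *)
Definition D (u : nat) (i : nat) : Prop := odd (u %/ 2 ^ i).

Inductive prcode : Type :=
| PZero : prcode                          (* constant 0, any arity *)
| PSucc : prcode
| PProj : nat -> prcode                   (* i-th projection (0-based) *)
| PComp : prcode -> seq prcode -> prcode
| PRec  : prcode -> prcode -> prcode
| PMu   : prcode -> prcode.

Inductive ev : prcode -> seq nat -> nat -> Prop :=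
| evZero xs : ev PZero xs 0
| evSucc x : ev PSucc [:: x] x.+1
| evProj i xs : i < size xs -> ev (PProj i) xs (nth 0 xs i)
| evComp f gs xs ys y : evs gs xs ys -> ev f ys y -> ev (PComp f gs) xs y
| evRec0 g h xs y : ev g xs y -> ev (PRec g h) (0 :: xs) y
| evRecS g h n xs z y :
    ev (PRec g h) (n :: xs) z -> ev h [:: n, z & xs] y ->
    ev (PRec g h) (n.+1 :: xs) y
| evMu f xs y :
    ev f (y :: xs) 0 ->
    (forall z, z < y -> exists w, ev f (z :: xs) w.+1) ->
    ev (PMu f) xs y
with evs : seq prcode -> seq nat -> seq nat -> Prop :=
| evsNil xs : evs [::] xs [::]
| evsCons g gs xs y ys : ev g xs y -> evs gs xs ys -> evs (g :: gs) xs (y :: ys).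

Definition prfun (k : nat) (c : prcode) : seq nat -> nat -> Prop :=
  fun xs y => size xs = k /\ ev c xs y.

Definition re_set (W : nat -> Prop) : Prop :=
  exists c : prcode, forall n, W n <-> exists y, ev c [:: n] y.

Definition ereducible (X Y : nat -> Prop) : Prop :=
  exists W : nat -> Prop, re_set W /\
    forall x, X x <-> exists u, W (tcode [:: x; u]) /\ (forall i, D u i -> Y i).

Definition set_compl (S : nat -> Prop) : nat -> Prop := fun n => ~ S n.

Definition join (A B : nat -> Prop) : nat -> Prop :=
  fun m => (~~ odd m /\ A m./2) \/ (odd m /\ B m./2).

(* A partial function N^k -> N is represented by its graph relation
   f : seq nat -> nat -> Prop, with f xs y meaning f(xs) is defined and = y. *)
Definition pfun := seq nat -> nat -> Prop.

Definition is_pfun (k : nat) (f : pfun) : Prop :=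
  (forall xs y, f xs y -> size xs = k) /\
  (forall xs y z, f xs y -> f xs z -> y = z).

Definition graph (f : pfun) : nat -> Prop :=
  fun n => exists xs y, f xs y /\ n = tcode (rcons xs y).

Definition inL (M : nat -> Prop) (k : nat) (f : pfun) : Prop :=
  1 <= k /\ is_pfun k f /\ ereducible (graph f) M.

Definition subst (f : pfun) (gs : seq pfun) : pfun :=
  fun xs y => exists ys : seq nat,
    size ys = size gs /\
    (forall i, i < size gs -> nth (fun _ _ => False) gs i xs (nth 0 ys i)) /\
    f ys y.

(* primitive recursion: F(0,x) = g(x), F(n+1,x) = h(n, F(n,x), x) *)
Definition primrec (g h : pfun) : pfun :=
  fun nxs y => exists n xs, nxs = n :: xs /\
    exists s : seq nat, size s = n.+1 /\ g xs (nth 0 s 0) /\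
      (forall i, i < n -> h [:: i, nth 0 s i & xs] (nth 0 s i.+1)) /\
      nth 0 s n = y.

Definition mu (f : pfun) : pfun :=
  fun xs y => f (y :: xs) 0 /\
    (forall z, z < y -> exists w, f (z :: xs) w /\ w <> 0).

Definition indicator (R : nat -> Prop) : pfun :=
  fun xs y => exists n, xs = [:: n] /\ ((R n /\ y = 1) \/ (~ R n /\ y = 0)).

(* Main.v *)
Require Import Defs.
From mathcomp Require Import all_boot zify.
From Stdlib Require Import Classical.

Fixpoint ev_det c xs y (H : ev c xs y) {struct H} : forall y', ev c xs y' -> y = y'
with evs_det gs xs ys (H : evs gs xs ys) {struct H} : forall ys', evs gs xs ys' -> ys = ys'.
Proof.
{ destruct H; intros y' H'; inversion H'; subst; auto.
  { have E := evs_det _ _ _ H _ H3; subst. exact: (ev_det _ _ _ H0 _ H6). }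
  { exact: (ev_det _ _ _ H _ H4). }
  { have E := ev_det _ _ _ H _ H6; subst. exact: (ev_det _ _ _ H0 _ H7). }
  { destruct (PeanoNat.Nat.lt_total y y') as [Hl|[Hl|Hl]]; auto.
    { move/ltP: Hl => Hl. destruct (H3 _ Hl) as [w Hw]. 
      exfalso. generalize (ev_det _ _ _ H _ Hw). discriminate. }
    { move/ltP: Hl => Hl. destruct (H0 _ Hl) as [w Hw]. 
      exfalso. generalize (ev_det _ _ _ Hw _ H2). discriminate. } } }
{ destruct H; intros ys' H'; inversion H'; subst; auto.
  have E := ev_det _ _ _ H _ H3; subst. by rewrite (evs_det _ _ _ H0 _ H6). }
Qed.

Lemma evP i xs y : i < size xs -> nth 0 xs i = y -> ev (PProj i) xs y.
Proof. by move=> H <-; apply: evProj. Qed.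
Lemma evP0 x xs : ev (PProj 0) (x :: xs) x. Proof. exact: evP. Qed.
Lemma evP1 x y xs : ev (PProj 1) (x :: y :: xs) y. Proof. exact: evP. Qed.
Lemma evP2 x y z xs : ev (PProj 2) (x :: y :: z :: xs) z. Proof. exact: evP. Qed.
Lemma evP3 x y z w xs : ev (PProj 3) (x :: y :: z :: w :: xs) w. Proof. exact: evP. Qed.

Lemma evC1 f g xs v y : ev g xs v -> ev f [:: v] y -> ev (PComp f [:: g]) xs y.
Proof. move=> H1 H2; apply: evComp H2; do 2?constructor => //. Qed.
Lemma evC2 f g1 g2 xs (v1 v2 : nat) y : ev g1 xs v1 -> ev g2 xs v2 -> ev f [:: v1; v2] y ->
  ev (PComp f [:: g1; g2]) xs y.
Proof. move=> H1 H2 H3; apply: evComp H3; do 3?constructor => //. Qed.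

Lemma evC1_inv f g xs y : ev (PComp f [:: g]) xs y -> exists v, ev g xs v /\ ev f [:: v] y.
Proof.
move=> H; inversion H; subst.
match goal with Hs : evs _ _ _ |- _ => inversion Hs; subst end.
match goal with Hs : evs [::] _ _ |- _ => inversion Hs; subst end.
eauto.
Qed.

Definition c_one := PComp PSucc [:: PZero].
Lemma ev_one xs : ev c_one xs 1.
Proof. apply: evC1; constructor. Qed.

Definition c_add := PRec (PProj 0) (PComp PSucc [:: PProj 1]).
Lemma ev_add x y : ev c_add [:: x; y] (x + y).
Proof.
elim: x => [|x IH]; first by apply: evRec0; apply: evP0.
apply: evRecS IH _; apply: evC1; [apply: evP1 | constructor].
Qed.

Definition c_pred := PRec PZero (PProj 0).
Lemma ev_pred n : ev c_pred [:: n] n.-1.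
Proof.
elim: n => [|n IH]; first by apply: evRec0; constructor.
apply: evRecS IH _; apply: evP0.
Qed.

Definition c_rsub := PRec (PProj 0) (PComp c_pred [:: PProj 1]).
Lemma ev_rsub n x : ev c_rsub [:: n; x] (x - n).
Proof.
elim: n => [|n IH]; first by apply: evRec0; rewrite subn0; apply: evP0.
apply: evRecS IH _; apply: evC1; [apply: evP1|]. rewrite subnS; apply: ev_pred.
Qed.

Definition c_sub := PComp c_rsub [:: PProj 1; PProj 0].
Lemma ev_sub x y : ev c_sub [:: x; y] (x - y).
Proof. apply: evC2; [apply: evP1|apply: evP0|apply: ev_rsub]. Qed.

Lemma ev_sub' x y v : x - y = v -> ev c_sub [:: x; y] v.
Proof. move=> <-; apply: ev_sub. Qed.

Definition c_mul := PRec PZero (PComp c_add [:: PProj 1; PProj 2]).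
Lemma ev_mul x y : ev c_mul [:: x; y] (x * y).
Proof.
elim: x => [|x IH]; first by apply: evRec0; constructor.
apply: evRecS IH _; apply: evC2; [apply: evP1|apply: evP2|].
rewrite mulSn addnC; apply: ev_add.
Qed.

Fixpoint tri d := if d is d'.+1 then tri d' + d else 0.
Definition c_tri := PRec PZero (PComp c_add [:: PProj 1; PComp PSucc [:: PProj 0]]).
Lemma ev_tri d : ev c_tri [:: d] (tri d).
Proof.
elim: d => [|d IH]; first by apply: evRec0; constructor.
apply: evRecS IH _; apply: evC2; [apply: evP1|apply: evC1; [apply: evP0|constructor]|].
apply: ev_add.
Qed.

Lemma tri2 n : tri n * 2 = n * n.+1.
Proof. elim: n => [|n IH] //=. nia. Qed.

Lemma cpairE x y : cpair x y = tri (x + y) + y.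
Proof. by rewrite /cpair -tri2 mulnK. Qed.

Lemma tri_mono m n : m <= n -> tri m <= tri n.
Proof. elim: n => [|n IH]; first by rewrite leqn0 => /eqP ->.
rewrite leq_eqVlt => /orP [/eqP -> //|H]. have := IH H. simpl. lia. Qed.

Definition c_cpair := PComp c_add [:: PComp c_tri [:: PComp c_add [:: PProj 0; PProj 1]]; PProj 1].
Lemma ev_cpair x y : ev c_cpair [:: x; y] (cpair x y).
Proof.
rewrite cpairE; apply: evC2; [|apply: evP1|apply: ev_add].
apply: evC1; [|apply: ev_tri]. apply: evC2; [apply: evP0|apply: evP1|apply: ev_add].
Qed.

Definition c_diag := PMu (PComp c_sub [:: PComp PSucc [:: PProj 1]; PComp c_tri [:: PComp PSucc [:: PProj 0]]]).
Lemma ev_diag x y : ev c_diag [:: cpair x y] (x + y).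
Proof.
rewrite cpairE; apply: evMu.
  apply: evC2; [apply: evC1; [apply: evP1|constructor]|apply: evC1; [apply: evC1; [apply: evP0|constructor]|apply: ev_tri]|].
  apply: ev_sub'; rewrite /=; lia.
move=> z Hz; exists (tri (x + y) + y - tri z.+1).
apply: evC2; [apply: evC1; [apply: evP1|constructor]|apply: evC1; [apply: evC1; [apply: evP0|constructor]|apply: ev_tri]|].
have H := @tri_mono z.+1 (x+y) Hz. apply: ev_sub'; lia.
Qed.

Definition c_snd := PComp c_sub [:: PProj 0; PComp c_tri [:: c_diag]].
Lemma ev_snd x y : ev c_snd [:: cpair x y] y.
Proof.
apply: evC2; [apply: evP0|apply: evC1; [apply: ev_diag|apply: ev_tri]|].
apply: ev_sub'; rewrite cpairE; lia.
Qed.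

Definition c_fst := PComp c_sub [:: c_diag; c_snd].
Lemma ev_fst x y : ev c_fst [:: cpair x y] x.
Proof.
apply: evC2; [apply: ev_diag|apply: ev_snd|].
apply: ev_sub'; lia.
Qed.

Lemma cpair_inj x y x' y' : cpair x y = cpair x' y' -> x = x' /\ y = y'.
Proof.
move=> E; split.
  have := ev_fst x y; rewrite E => H; exact: ev_det H _ (ev_fst x' y').
have := ev_snd x y; rewrite E => H; exact: ev_det H _ (ev_snd x' y').
Qed.

Lemma cpair_surj p : exists x y, p = cpair x y.
Proof.
elim: p => [|p [x [y ->]]]; first by exists 0, 0.
case: x => [|x].
  exists y.+1, 0; rewrite !cpairE add0n !addn0 /=; lia.
exists x, y.+1; rewrite !cpairE addSn (_ : x + y.+1 = (x + y).+1); lia.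
Qed.

Definition c_par := PRec PZero (PComp c_sub [:: c_one; PProj 1]).
Lemma ev_par n : ev c_par [:: n] (odd n).
Proof.
elim: n => [|n IH]; first by apply: evRec0; constructor.
apply: evRecS IH _; apply: evC2; [apply: ev_one|apply: evP1|].
apply: ev_sub'; rewrite /=; by case: (odd n).
Qed.

Definition c_half := PRec PZero (PComp c_add [:: PProj 1; PComp c_par [:: PProj 0]]).
Lemma ev_half n : ev c_half [:: n] n./2.
Proof.
elim: n => [|n IH]; first by apply: evRec0; constructor.
apply: evRecS IH _; apply: evC2; [apply: evP1|apply: evC1; [apply: evP0|apply: ev_par]|].
have -> : n.+1./2 = n./2 + odd n by rewrite /= uphalf_half addnC.
apply: ev_add.
Qed.

Definition c_pow2 := PRec c_one (PComp c_add [:: PProj 1; PProj 1]).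
Lemma ev_pow2 n : ev c_pow2 [:: n] (2 ^ n).
Proof.
elim: n => [|n IH]; first by apply: evRec0; apply: ev_one.
apply: evRecS IH _; apply: evC2; [apply: evP1|apply: evP1|].
rewrite expnS mul2n -addnn; apply: ev_add.
Qed.

Definition c_neq := PComp c_sub [:: c_one; PComp c_sub [:: c_one; PComp c_add [:: c_sub; PComp c_sub [:: PProj 1; PProj 0]]]].
Lemma ev_neq a b : ev c_neq [:: a; b] (a != b).
Proof.
apply: (@evC2 _ _ _ _ 1 (1 - ((a-b)+(b-a)))); [apply: ev_one| |apply: ev_sub'].
  apply: evC2; [apply: ev_one| |apply: ev_sub].
  apply: evC2; [apply: ev_sub|apply: evC2; [apply: evP1|apply: evP0|apply: ev_sub]|apply: ev_add]. case: eqVneq => [->|H] /=; first by rewrite !subnn.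
have : a < b \/ b < a by lia. lia.
Qed.

Lemma D_pow2 x i : D (2 ^ x) i <-> i = x.
Proof.
rewrite /D; case: (ltnP x i) => H.
  rewrite divn_small ?ltn_exp2l //; split=> // E; lia.
rewrite -expnB // oddX orbF; split; [move/eqP; lia| move=> ->; by rewrite subnn].
Qed.

Lemma subst1_intro (f g1 : pfun) xs a y : g1 xs a -> f [:: a] y -> subst f [:: g1] xs y.
Proof. move=> H1 H; exists [:: a]; split=> //; split=> // [] [|i] //. Qed.
Lemma subst2_intro (f g1 g2 : pfun) xs a b y : g1 xs a -> g2 xs b -> f [:: a; b] y ->
  subst f [:: g1; g2] xs y.
Proof. move=> H1 H2 H; exists [:: a; b]; split=> //; split=> // [] [|[|i]] //. Qed.
Lemma subst3_intro (f g1 g2 g3 : pfun) xs a b c y : g1 xs a -> g2 xs b -> g3 xs c ->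
  f [:: a; b; c] y -> subst f [:: g1; g2; g3] xs y.
Proof. move=> H1 H2 H3 H; exists [:: a; b; c]; split=> //; split=> // [] [|[|[|i]]] //. Qed.

Lemma primrec0_intro (g h : pfun) xs y : g xs y -> primrec g h (0 :: xs) y.
Proof. move=> H; exists 0, xs; split=> //; exists [:: y]; do 3?split=> //. Qed.
Lemma primrec1_intro (g h : pfun) xs z y : g xs z -> h [:: 0, z & xs] y ->
  primrec g h (1 :: xs) y.
Proof. move=> H1 H2; exists 1, xs; split=> //; exists [:: z; y]; do 3?split=> //.
by case. Qed.

Lemma evMu_inv f xs y : ev (PMu f) xs y -> ev f (y :: xs) 0.
Proof. move=> H; inversion H; subst; assumption. Qed.

Lemma guard_re t q v : ev t [:: q] v ->
  ((exists y, ev (PMu (PComp t [:: PProj 1])) [:: q] y) <-> v = 0).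
Proof.
move=> Ht; split.
  case=> y /evMu_inv H.
  have [w [Hw1 Hw2]] := evC1_inv _ _ _ _ H.
  have E : w = q by exact: ev_det _ _ _ Hw1 _ (evP1 _ _ _).
  subst; exact: ev_det _ _ _ Ht _ Hw2.
move=> E; subst; exists 0; apply: evMu => //. apply: evC1 Ht; exact: evP1.
Qed.

Definition testF := PComp c_add [:: PComp c_snd [:: c_fst];
   PComp c_neq [:: c_snd; PComp c_pow2 [:: PComp c_fst [:: c_fst]]]].
Lemma ev_testF a b u : ev testF [:: cpair (cpair a b) u] (b + (u != 2 ^ a)).
Proof.
apply: evC2; [apply: evC1; [apply: ev_fst|apply: ev_snd]| |apply: ev_add].
apply: evC2; [apply: ev_snd| |apply: ev_neq].
apply: evC1; [apply: evC1; [apply: ev_fst|apply: ev_fst]|apply: ev_pow2].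
Qed.

Definition c2 := PComp c_cpair [:: PProj 0; PComp c_fst [:: PProj 1]].
Definition testB := PComp c_neq [:: PComp c_snd [:: PProj 1];
   PComp c_pow2 [:: PComp c_add [:: c2; c2]]].
Lemma ev_testB m x u : ev testB [:: m; cpair x u] (u != 2 ^ (cpair m x + cpair m x)).
Proof.
have H2 : ev c2 [:: m; cpair x u] (cpair m x).
  apply: evC2; [apply: evP0|apply: evC1; [apply: evP1|apply: ev_fst]|apply: ev_cpair].
apply: evC2; [apply: evC1; [apply: evP1|apply: ev_snd]| |apply: ev_neq].
apply: evC1; [apply: evC2; [apply: H2|apply: H2|apply: ev_add]|apply: ev_pow2].
Qed.

Lemma testB_re x u : (exists y, ev (PMu testB) [:: cpair x u] y) <->
  exists m, u = 2 ^ (cpair m x + cpair m x).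
Proof.
split.
  case=> y /evMu_inv H. exists y.
  have := ev_det _ _ _ (ev_testB y x u) _ H. by case: eqVneq.
case=> m0 Hm0.
have Hex : exists m, u == 2 ^ (cpair m x + cpair m x) by exists m0; apply/eqP.
case: (ex_minnP Hex) => m /eqP Hm Hmin.
exists m; apply: evMu.
  have := ev_testB m x u. by rewrite Hm eqxx.
move=> z Hz; exists 0. have := ev_testB z x u.
case: eqVneq => // E. have := Hmin z (introT eqP E). lia.
Qed.

Definition c_t := PComp c_cpair [:: PComp c_cpair [:: PComp c_half [:: c_fst];
   PComp c_par [:: c_fst]]; c_snd].
Lemma ev_t z u : ev c_t [:: cpair z u] (cpair (cpair z./2 (odd z)) u).
Proof.
apply: evC2; [|apply: ev_snd|apply: ev_cpair].
apply: evC2; [apply: evC1; [apply: ev_fst|apply: ev_half]|apply: evC1; [apply: ev_fst|apply: ev_par]|apply: ev_cpair].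
Qed.

Lemma inL_ext M k (f f' : pfun) : (forall xs y, f xs y <-> f' xs y) -> inL M k f -> inL M k f'.
Proof.
move=> E [Hk [[Hs Hu] [W [HW HR]]]]; split=> //; split.
  split; [move=> xs y /E; exact: Hs| move=> xs y z /E H1 /E H2; exact: Hu H1 H2].
exists W; split=> // n; rewrite -HR /graph; split; case=> xs [y [H1 H2]]; exists xs, y; split=> //; exact/E.
Qed.

Lemma prfun_iff k c xs v y : ev c xs v -> (prfun k c xs y <-> size xs = k /\ y = v).
Proof.
move=> Hv; split; first by case=> Hs Hy; split=> //; exact: ev_det _ _ _ Hy _ Hv.
by case=> Hs ->.
Qed.

Lemma tcode2 a b : tcode [:: a; b] = cpair a b. Proof. by []. Qed.

Lemma graph1 k (g : pfun) n b : is_pfun k g -> k = 1 -> (graph g (cpair n b) <-> g [:: n] b).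
Proof.
move=> [Hs _] Hk; split.
  case=> xs [y [H E]]. have := Hs _ _ H. rewrite Hk.
  case: xs H E => [|a [|]] //= H E _.
  by case: (cpair_inj _ _ _ _ E) => -> ->.
by move=> H; exists [:: n], b.
Qed.

Theorem lemma2 (M : nat -> Prop) :
  (* (1) recursive functions and closure properties *)
  (forall (k : nat) (c : prcode), 1 <= k -> inL M k (prfun k c)) ->
  (forall (m k : nat) (f : pfun) (gs : seq pfun),
      1 <= k -> inL M m f -> size gs = m ->
      (forall i, i < m -> inL M k (nth (fun _ _ => False) gs i)) ->
      inL M k (subst f gs)) ->
  (forall (k : nat) (g h : pfun),
      inL M k g -> inL M k.+2 h -> inL M k.+1 (primrec g h)) ->
  (forall (k : nat) (f : pfun),
      1 <= k -> inL M k.+1 f -> inL M k (mu f)) ->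
  (* (2) representation of unary functions via a set R *)
  (forall f : pfun, inL M 1 f ->
      exists (R : nat -> Prop) (alpha omega : pfun),
        inL M 1 alpha /\ inL M 1 omega /\
        (forall m, R m -> exists y, alpha [:: m] y) /\
        (forall m, R m -> exists y, omega [:: m] y) /\
        inL M 1 (indicator R) /\
        (forall x y, f [:: x] y <->
           exists m, R m /\ alpha [:: m] x /\ omega [:: m] y)) ->
  (* (3) a universal binary function *)
  (exists F : pfun, inL M 2 F /\
      forall f : pfun, inL M 1 f ->
        exists n, forall x y, F [:: n; x] y <-> f [:: x] y) ->
  exists S : nat -> Prop,
    ereducible M (join S (set_compl S)) /\ ereducible (join S (set_compl S)) M.
Proof.
move=> H1 Hsub Hrec _ H2 _.
pose f : pfun := fun xs y => exists x, xs = [:: x] /\ M x /\ y = 0.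
have Hf : inL M 1 f.
  split=> //; split.
    split; first by move=> xs y [x [-> _]].
    by move=> xs y z [x [_ [_ ->]]] [x' [_ [_ ->]]].
  exists (fun q => exists y, ev (PMu (PComp testF [:: PProj 1])) [:: q] y); split.
    by exists (PMu (PComp testF [:: PProj 1])).
  move=> n; have [a [b ->]] := cpair_surj n.
  have Hg : graph f (cpair a b) <-> b = 0 /\ M a.
    split.
      case=> xs [y [[x [-> [Mx ->]]] E]].
      by case: (cpair_inj _ _ _ _ E) => -> ->.
    by case=> -> Ma; exists [:: a], 0; split=> //; exists a.
  rewrite Hg; split.
    case=> -> Ma; exists (2 ^ a); split.
      rewrite tcode2 (guard_re _ _ _ (ev_testF a 0 _)); by rewrite eqxx.
    by move=> i /D_pow2 ->.
  case=> u []; rewrite tcode2 (guard_re _ _ _ (ev_testF a b u)) => E HD.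
  have Hb : b = 0 by lia.
  have Hu : u = 2 ^ a by move: E; case: eqVneq => //; lia.
  split=> //; apply: HD; rewrite Hu; exact/D_pow2.
have [R [alpha [omega [Ha [Ho [Hda [Hdo [Hchi Hrep]]]]]]]] := H2 f Hf.
have HM : forall x, M x <-> exists m, R m /\ alpha [:: m] x.
  move=> x; split.
    move=> Mx; have : f [:: x] 0 by exists x.
    by case/Hrep => m [Rm [Hax _]]; exists m.
  case=> m [Rm Hax]; have [y Hy] := Hdo _ Rm.
  have : f [:: x] y by apply/Hrep; exists m.
  by case=> x' [[->] [Mx _]].
pose S n := exists m x, n = cpair m x /\ R m /\ alpha [:: m] x.
have SE : forall m x, S (cpair m x) <-> R m /\ alpha [:: m] x.
  move=> m x; split; last by move=> [Rm Ha']; exists m, x.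
  by case=> m' [x' [E H]]; case: (cpair_inj _ _ _ _ E) => -> ->.
exists S; split.
  exists (fun q => exists y, ev (PMu testB) [:: q] y); split; first by exists (PMu testB).
  move=> x; rewrite HM; split.
    case=> m [Rm Hax]; exists (2 ^ (cpair m x + cpair m x)); split.
      by rewrite tcode2 testB_re; exists m.
    move=> i /D_pow2 ->; left; rewrite addnn odd_double doubleK; split=> //.
    exact/SE.
  case=> u []; rewrite tcode2 testB_re => -[m ->] HD.
  have := HD (cpair m x + cpair m x); rewrite D_pow2 => /(_ erefl).
  rewrite /join addnn odd_double doubleK /= => -[[_ /SE [Rm Hax]]|[]//].
  by exists m.
pose P42 := prfun 4 (PProj 2). pose P43 := prfun 4 (PProj 3).
pose A4 := subst alpha [:: P42].
pose NEQ := prfun 2 c_neq.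
pose Hh := subst NEQ [:: A4; P43].
pose ONE2 := prfun 2 c_one.
pose G := primrec ONE2 Hh.
pose FST := prfun 1 c_fst. pose SND := prfun 1 c_snd.
pose C := subst (indicator R) [:: FST].
pose g := subst G [:: C; FST; SND].
have HA4 : inL M 4 A4.
  apply: Hsub Ha _ _ => // -[|i] //= _; exact: H1.
have HHh : inL M 4 Hh.
  apply: Hsub (H1 2 c_neq _) _ _ => // -[|[|i]] //= _; exact: H1.
have HG : inL M 3 G by apply: Hrec => //; exact: H1.
have HC : inL M 1 C by apply: Hsub Hchi _ _ => // -[|i] //= _; exact: H1.
have Hgl : inL M 1 g.
  by apply: Hsub HG _ _ => // -[|[|[|i]]] //= _; exact: H1.
have HFST : forall m x, FST [:: cpair m x] m by move=> m x; split=> //; exact: ev_fst.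
have HSND : forall m x, SND [:: cpair m x] x by move=> m x; split=> //; exact: ev_snd.
have HONE : forall a b, ONE2 [:: a; b] 1 by move=> a b; split=> //; exact: ev_one.
have Hgv : forall m x b, g [:: cpair m x] b <->
    (b = 0 /\ S (cpair m x)) \/ (b = 1 /\ ~ S (cpair m x)).
  move=> m x b; rewrite SE.
  have [_ [[_ Hu] _]] := Hgl.
  case: (classic (R m)) => Rm.
    have [a Hax] := Hda _ Rm.
    have Hgo : g [:: cpair m x] (a != x).
      apply: (@subst3_intro _ _ _ _ _ 1 m x) => //.
        apply: (@subst1_intro _ _ _ m) => //; exists m; split=> //; left; split=> //.
      apply: (@primrec1_intro _ _ _ 1) => //.
      apply: (@subst2_intro _ _ _ _ a x).
          by apply: (@subst1_intro _ _ _ m) => //; split=> //; exact: evP.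
        by split=> //; exact: evP.
      by split=> //; exact: ev_neq.
    have [_ [[_ Hau] _]] := Ha.
    split.
      move=> Hb; have E := Hu _ _ _ Hb Hgo; subst b.
      case: eqVneq => [<-|Ne] /=; first by left; do 2?split.
      right; split=> // -[_ Hax']. by move: Ne; rewrite (Hau _ _ _ Hax Hax') eqxx.
    case=> [[-> [_ Hax']] | [-> Hn]].
      by move: Hgo; rewrite (Hau _ _ _ Hax Hax') eqxx.
    case: eqVneq Hgo => [E|] //.
    by subst a; case: Hn; split.
  have Hgo : g [:: cpair m x] 1.
    apply: (@subst3_intro _ _ _ _ _ 0 m x) => //.
      apply: (@subst1_intro _ _ _ m) => //; exists m; split=> //; right; split=> //.
    exact: primrec0_intro.
  split.
    move=> Hb; have E := Hu _ _ _ Hb Hgo; subst b.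
    by right; split=> // -[].
  by case=> [[_ [Rm' _]] | [-> _]].
have [_ [Hgp [Wg [[cg Hcg] HWg]]]] := Hgl.
exists (fun q => exists y, ev (PComp cg [:: c_t]) [:: q] y); split.
  by exists (PComp cg [:: c_t]).
move=> z.
have [m [x Ez]] := cpair_surj z./2.
have Hj : join S (set_compl S) z <-> graph g (cpair z./2 (odd z)).
  rewrite (graph1 _ _ _ _ Hgp erefl) Ez Hgv /join /set_compl Ez.
  case: (odd z) => /=.
    split=> [[[]|[_ H]]|[[]|[_ H]]] //; by right.
  split=> [[[_ H]|[]]|[[_ H]|[]]] //; by left.
rewrite Hj HWg; split; case=> u [HW HD]; exists u; split=> //; rewrite tcode2 in HW *.
  have := HW; rewrite Hcg; case=> y Hy; exists y; exact: evC1 (ev_t z u) Hy.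
case: HW => y /(evC1_inv _ _ _ _) [v [Hv1 Hv2]].
have E := ev_det _ _ _ Hv1 _ (ev_t z u); subst v.
by apply/Hcg; exists y.
Qed.
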